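(* Let $\mathcal K=(\mathcal T,\mathcal B)$ be a consistent $\mathcal{BALC}$ knowledge base, $C,D$ $\mathcal{ALC}$ concepts, and $\kappa,\lambda$ contexts with $P_{\mathcal B}(\lambda)>0$. Then $P_{\mathcal K}((C\sqsubseteq D)^\kappa\mid\lambda)>0$ if and only if $P_{\mathcal K}((C\sqsubseteq D)^{\lambda\wedge\kappa})>1-P_{\mathcal B}(\lambda)$.
   Context: $V$ is a finite set of random variables, each with a finite value set; a world $\omega$ assigns a value to each variable. A Bayesian network $\mathcal B$ over $V$ defines $P_{\mathcal{B}}(\omega)=\prod_{X\in V}P(X=\omega(X)\mid \pi(X)=\omega(\pi(X)))$. A primitive context is a set of pairs $(X,x)$, $x$ a value of $X$; $\omega\models\kappa$ iff $\omega(X)=x$ for all $(X,x)\in\kappa$. A complex context is a finite nonempty set of primitive contexts, satisfied by $\omega$ iff $\omega$ satisfies one of them; $\phi\wedge\psi:=\{\kappa\cup\lambda\mid\kappa\in\phi,\lambda\in\psi\}$. $P_{\mathcal B}(\phi)=\sum_{\omega\models\phi}P_{\mathcal B}(\omega)$. $\mathcal T$ is a finite set of contextual GCIs. A $V$-interpretation $\mathcal{V}=(\Delta^{\mathcal V},\cdot^{\mathcal V},v^{\mathcal V})$ is an $\mathcal{ALC}$ interpretation plus a world; $\mathcal V\models\alpha^\phi$ iff $v^{\mathcal V}\not\models\phi$ or the $\mathcal{ALC}$ interpretation satisfies $\alpha$. A probabilistic interpretation $\mathcal P=(\mathcal J,P_{\mathcal J})$ is a finite set of $V$-interpretations with a distribution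 assigning each positive probability; it is a model of $\mathcal K$ iff every member satisfies all axioms of $\mathcal T$ and $\sum_{\mathcal V\in\mathcal J,\,v^{\mathcal V}=\omega}P_{\mathcal J}(\mathcal V)=P_{\mathcal B}(\omega)$ for every world $\omega$; $\mathcal K$ is consistent iff it has a model. $P_{\mathcal K}((C\sqsubseteq D)^\phi)=\inf_{\mathcal P\models\mathcal K}\sum_{\mathcal V\in\mathcal J,\ \mathcal V\models(C\sqsubseteq D)^\phi}P_{\mathcal J}(\mathcal V)$; for $P_{\mathcal B}(\lambda)>0$, $P_{\mathcal K}((C\sqsubseteq D)^\kappa\mid\lambda)=\inf_{\mathcal P\models\mathcal K}\frac{1}{P_{\mathcal B}(\lambda)}\sum_{\mathcal V\in\mathcal J,\ v^{\mathcal V}\models\lambda,\ \mathcal V\models(C\sqsubseteq D)^\kappa}P_{\mathcal J}(\mathcal V)$. *)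

(* Defs.v *)
From HB Require Import structures.
From mathcomp Require Import all_boot all_order all_algebra.
From mathcomp Require Import boolp classical_sets reals.
Unset Printing Implicit Defensive.
Import Order.TTheory GRing.Theory Num.Theory.
Local Open Scope ring_scope.

Section BALC.
Variable R : realType.
(* Random variables: a finite type V; each X has a finite value set Val X. *)
Variable V : finType.
Variable Val : V -> finType.

Local Notation world := {dffun forall X : V, Val X}.

(* Bayesian network: a DAG of parents with conditional probability tables.
   The CPT of X is given as a function of the world that only depends on the
   values of the parents of X. *)
Record BN := mkBN {
  parents : V -> {set V};
  bn_acyclic : exists rk : V -> nat, forall X Y, Y \in parents X -> (rk Y < rk X)%N;
  cpt : forall X : V, world -> Val X -> R;
  cpt_local : forall X (w w' : world),
      (forall Y, Y \in parents X -> w Y = w' Y) -> forall x, cpt X w x = cpt X w' x;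
  cpt_ge0 : forall X w x, 0 <= cpt X w x;
  cpt_sum1 : forall X w, \sum_(x : Val X) cpt X w x = 1
}.


Definition PB (B : BN) (w : world) : R := \prod_(X : V) cpt B X w (w X).

Definition pctx := {set {X : V & Val X}}.
Definition cctx := {set pctx}.               (* complex context (nonempty required where used) *)

Definition psat (w : world) (k : pctx) : bool :=
  [forall p in k, w (tag p) == tagged p].
Definition csat (w : world) (phi : cctx) : bool := [exists k in phi, psat w k].

Definition cand (phi psi : cctx) : cctx := [set k :|: l | k in phi, l in psi].

Definition PBc (B : BN) (phi : cctx) : R := \sum_(w : world | csat w phi) PB B w.

Variables NC NR : Type.
Inductive concept :=
  | CTop | CBot | CName of NC | CNeg of concept
  | CAnd of concept & concept | COr of concept & concept
  | CEx of NR & concept | CAll of NR & concept.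

Record cgci := CGCI { gci_lhs : concept; gci_rhs : concept; gci_ctx : cctx }.

Record VInterp := mkVI {
  dom : Type;
  dom_inhabited : inhabited dom;
  iconc : NC -> dom -> Prop;
  irole : NR -> dom -> dom -> Prop;
  vworld : world
}.

Fixpoint csem (I : VInterp) (C : concept) : dom I -> Prop :=
  match C with
  | CTop => fun _ => True
  | CBot => fun _ => False
  | CName A => iconc I A
  | CNeg C => fun d => ~ csem I C d
  | CAnd C1 C2 => fun d => csem I C1 d /\ csem I C2 d
  | COr C1 C2 => fun d => csem I C1 d \/ csem I C2 d
  | CEx r C => fun d => exists e, irole I r d e /\ csem I C e
  | CAll r C => fun d => forall e, irole I r d e -> csem I C e
  end.

Definition sat_gci (I : VInterp) (a : cgci) : Prop :=
  ~~ csat (vworld I) (gci_ctx a) \/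
  (forall d, csem I (gci_lhs a) d -> csem I (gci_rhs a) d).

Record KB := mkKB { tbox : seq cgci; kbn : BN }.

Record PInterp := mkPI {
  pidx : finType;
  pint : pidx -> VInterp;
  pprob : pidx -> R;
  pprob_gt0 : forall i, 0 < pprob i;
  pprob_sum1 : \sum_(i : pidx) pprob i = 1
}.

Fixpoint in_tbox (a : cgci) (s : seq cgci) : Prop :=
  if s is b :: s' then b = a \/ in_tbox a s' else False.

Definition is_model (K : KB) (P : PInterp) : Prop :=
  (forall i, forall a, in_tbox a (tbox K) -> sat_gci (pint P i) a) /\
  (forall w : world, \sum_(i : pidx P | vworld (pint P i) == w) pprob P i = PB (kbn K) w).

Definition consistent (K : KB) : Prop := exists P, is_model K P.

Definition PK (K : KB) (C D : concept) (phi : cctx) : R :=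
  inf [set r : R | exists P : PInterp, is_model K P /\
        r = \sum_(i : pidx P | `[< sat_gci (pint P i) (CGCI C D phi) >]) pprob P i].

Definition PKcond (K : KB) (C D : concept) (kappa lambda : cctx) : R :=
  inf [set r : R | exists P : PInterp, is_model K P /\
        r = (PBc (kbn K) lambda)^-1 *
            \sum_(i : pidx P | csat (vworld (pint P i)) lambda &&
                               `[< sat_gci (pint P i) (CGCI C D kappa) >]) pprob P i].

End BALC.

Arguments PB {R V Val} B w.
Arguments PBc {R V Val} B phi.
Arguments cand {V Val} phi psi.
Arguments csat {V Val} w phi.
Arguments kbn {R V Val NC NR} k.
Arguments tbox {R V Val NC NR} k.
Arguments consistent {R V Val NC NR} K.
Arguments is_model {R V Val NC NR} K P.
Arguments PK {R V Val NC NR} K C D phi.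
Arguments PKcond {R V Val NC NR} K C D kappa lambda.

(* Main.v *)
Require Import Defs.
From HB Require Import structures.
From mathcomp Require Import all_boot all_order all_algebra.
From mathcomp Require Import boolp classical_sets reals.
Import Order.TTheory GRing.Theory Num.Theory.
Local Open Scope ring_scope.

Local Arguments pidx {R V Val NC NR} _.
Local Arguments pint {R V Val NC NR} _ _.
Local Arguments pprob {R V Val NC NR} _ _.
Local Arguments pprob_sum1 {R V Val NC NR} _.
Local Arguments vworld {V Val NC NR} _.
Local Arguments sat_gci {V Val NC NR} _ _.
Local Arguments CGCI {V Val NC NR} _ _ _.

Section Aux.
Variables (R : realType) (V : finType) (Val : V -> finType) (NC NR : Type).

Lemma psatU (w : {dffun forall X : V, Val X}) (k l : pctx V Val) :
  psat V Val w (k :|: l) = psat V Val w k && psat V Val w l.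
Proof.
apply/idP/andP.
- move=> /forall_inP H; split; apply/forall_inP => x Hx; apply: H;
  by rewrite finset.in_setU Hx ?orbT.
- case=> /forall_inP H1 /forall_inP H2; apply/forall_inP => x.
  by rewrite finset.in_setU => /orP [] ?; [apply: H1|apply: H2].
Qed.

Lemma csat_cand (w : {dffun forall X : V, Val X}) (phi psi : cctx V Val) :
  csat w (cand phi psi) = csat w phi && csat w psi.
Proof.
apply/idP/andP.
- move=> /existsP [k /andP [/finset.imset2P [a b Ha Hb ->]]]; rewrite psatU => /andP [H1 H2].
  by split; apply/existsP; [exists a|exists b]; rewrite ?Ha ?Hb.
- case=> /existsP [a /andP [Ha H1]] /existsP [b /andP [Hb H2]].
  apply/existsP; exists (a :|: b); rewrite psatU H1 H2 andbT.
  rewrite andbT; apply/finset.imset2P; exists a b => //.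
Qed.

Lemma key (K : KB R V Val NC NR) (C D : concept NC NR) (kappa lambda : cctx V Val)
  (P : PInterp R V Val NC NR) : is_model K P ->
  \sum_(i : pidx P | `[< sat_gci (pint P i) (CGCI C D (cand lambda kappa)) >]) pprob P i
  = (1 - PBc (kbn K) lambda) +
    \sum_(i : pidx P | csat (vworld (pint P i)) lambda &&
                               `[< sat_gci (pint P i) (CGCI C D kappa) >]) pprob P i.
Proof.
move=> [_ HM].
have HL : \sum_(i : pidx P | csat (vworld (pint P i)) lambda) pprob P i
          = PBc (kbn K) lambda.
  rewrite (partition_big (fun i => vworld (pint P i)) (fun w => csat w lambda)) //.
  apply: eq_bigr => w Hw; rewrite -HM; apply: eq_bigl => i.
  by case: (eqVneq (vworld (pint P i)) w) => [->|_]; rewrite ?Hw ?andbF ?eqxx.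
have H1 : \sum_(i : pidx P | ~~ csat (vworld (pint P i)) lambda) pprob P i
          = 1 - PBc (kbn K) lambda.
  rewrite -HL -(pprob_sum1 P) [\sum_i pprob P i](bigID (fun i => csat (vworld (pint P i)) lambda)) /=.
  by rewrite [X in _ = X - _]addrC addrK.
rewrite (bigID (fun i => csat (vworld (pint P i)) lambda)) /= addrC -H1.
congr (_ + _); apply: eq_bigl => i.
- case Hc: (csat _ lambda) => /=; last first.
    by rewrite andbT; apply/asboolP; rewrite /sat_gci /= csat_cand Hc; left.
  by rewrite andbF.
- case Hc: (csat _ lambda) => /=; last by rewrite andbF.
  by rewrite andbT /sat_gci /= csat_cand Hc.
Qed.

End Aux.

Theorem mainTheorem12 (R : realType) (V : finType) (Val : V -> finType)
  (NC NR : Type) (K : KB R V Val NC NR) (C D : concept NC NR)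
  (kappa lambda : cctx V Val) :
  consistent K ->
  kappa != finset.set0 -> lambda != finset.set0 ->
  0 < PBc (kbn K) lambda ->
  (0 < PKcond K C D kappa lambda <->
   1 - PBc (kbn K) lambda < PK K C D (cand lambda kappa)).
Proof.
move=> [P0 HP0] _ _ Hp.
rewrite /PKcond /PK.
set p := PBc (kbn K) lambda.
match goal with |- context[@reals.inf _ ?E] => set EE := E end. match goal with |- context[@reals.inf _ ?F] => lazymatch F with EE => fail | _ => set FF := F end end.
have pn0 : p != 0 by rewrite gt_eqF.
have HF : forall r, FF r -> exists e, EE e /\ r = (1 - p) + p * e.
  move=> r [P [HP ->]]; exists (p^-1 * \sum_(i : pidx P | csat (vworld (pint P i)) lambda &&
                               `[< sat_gci (pint P i) (CGCI C D kappa) >]) pprob P i).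
  split; first by exists P.
  by rewrite mulVKf // (@key _ _ _ _ _ K C D kappa lambda P HP).
have HE : forall e, EE e -> FF ((1 - p) + p * e).
  move=> r [P [HP ->]]; exists P; split => //.
  by rewrite mulVKf // (@key _ _ _ _ _ K C D kappa lambda P HP).
have Enz : exists e, EE e.
  by exists (p^-1 * \sum_(i : pidx P0 | csat (vworld (pint P0 i)) lambda &&
                               `[< sat_gci (pint P0 i) (CGCI C D kappa) >]) pprob P0 i); exists P0.
have Fnz : exists e, FF e.
  by case: Enz => e /HE Fe; exists ((1 - p) + p * e).
have Elb : has_lbound EE.
  exists 0 => r [P [HP ->]]; apply: mulr_ge0; first by rewrite invr_ge0 ltW.
  by apply: sumr_ge0 => i _; apply: ltW; apply: pprob_gt0.
have Flb : has_lbound FF.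
  exists 0 => r [P [HP ->]].
  by apply: sumr_ge0 => i _; apply: ltW; apply: pprob_gt0.
split.
- move=> H.
  have Hle : (1 - p) + p * reals.inf EE <= reals.inf FF.
    apply: lb_le_inf => // r /HF [e [Ee ->]].
    by rewrite lerD2l ler_pM2l //; apply: ge_inf.
  apply: lt_le_trans Hle.
  by rewrite ltrDl mulr_gt0.
- move=> H; rewrite ltNge; apply/negP => HE0.
  have xpos : 0 < (reals.inf FF - (1 - p)) / p by rewrite divr_gt0 // subr_gt0.
  have [e Ee ex] := inf_lt Enz (le_lt_trans HE0 xpos).
  have := ge_inf Flb (HE e Ee).
  apply/negP; rewrite -ltNge.
  have -> : reals.inf FF = (1 - p) + p * ((reals.inf FF - (1 - p)) / p).
    by rewrite mulrC divfK // addrC subrK.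
  by rewrite ltrD2l ltr_pM2l.
Qed.
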